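(* Let $q$ be a prime power, $\mu$ a positive integer, and $S$ a minimal $(1,\mu)$-saturating set in $PG(2,q)$. Then (i) $\mu\le (q+1)\binom{q}{2}$; (ii) $|S|\le q+\mu+1$ if $\mu\le q+2$, and $|S|\le \min\{q+\mu,\;q^2+q\}$ if $\mu\ge q+3$.
   Context: $PG(2,q)$ is the projective plane over $\mathbb{F}_q$. For a point set $S$, a secant of $S$ is a line $\ell$ with $|\ell\cap S|\ge2$, counted with multiplicity $\binom{|\ell\cap S|}{2}$. A set $S$ of points of $PG(2,q)$ is $(1,\mu)$-saturating if (M1) $S$ spans $PG(2,q)$, (M2) $S\neq PG(2,q)$, and (M3) every point $Q\notin S$ lies on secants of $S$ whose multiplicities sum to at least $\mu$. A $(1,\mu)$-saturating set of size $n$ is minimal if it does not contain a $(1,\mu)$-saturating set of size $n-1$. *)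

(* Defs.v *)
From HB Require Import structures.
From mathcomp Require Import all_boot all_order all_algebra.
Set Implicit Arguments. Unset Strict Implicit. Unset Printing Implicit Defensive.
Import GRing.Theory.
Local Open Scope ring_scope.

(* PG(2,q) over a finite field F (q = #|F|).  A projective point is
   represented by its unique normalized homogeneous coordinate vector in
   F^3: nonzero, with first nonzero coordinate equal to 1. Lines are
   represented by normalized dual coordinate vectors. *)

Definition normalized (F : fieldType) (v : 'rV[F]_3) : bool :=
  (v 0 0 == 1) ||
  ((v 0 0 == 0) && ((v 0 1 == 1) || ((v 0 1 == 0) && (v 0 2 == 1)))).

Notation pg_point F := {v : 'rV[F]_3 | normalized v}.
Notation pg_line F := {v : 'rV[F]_3 | normalized v}.

Definition incident (F : fieldType) (P : pg_point F) (l : pg_line F) : bool :=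
  \sum_(i < 3) (val P) 0 i * (val l) 0 i == 0.

Section PG.
Variable F : finFieldType.

Definition meet_card (S : {set pg_point F}) (l : pg_line F) : nat :=
  #|[set P in S | incident P l]|.

Definition secant_mult (S : {set pg_point F}) (Q : pg_point F) : nat :=
  (\sum_(l : pg_line F | incident Q l) 'C(meet_card S l, 2))%N.

Definition spans_plane (S : {set pg_point F}) : bool :=
  row_full (\sum_(P in S) <<val P>>)%MS.

Definition saturating (mu : nat) (S : {set pg_point F}) : Prop :=
  [/\ spans_plane S, S != [set: pg_point F] &
      forall Q : pg_point F, Q \notin S -> (mu <= secant_mult S Q)%N].

Definition minimal_saturating (mu : nat) (S : {set pg_point F}) : Prop :=
  saturating mu S /\
  forall T : {set pg_point F}, T \subset S -> #|T| = #|S|.-1 ->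
    ~ saturating mu T.

End PG.

(* Main.v *)
Require Import Defs.
From mathcomp Require Import all_boot all_order all_algebra.
From mathcomp Require Import ring zify.
Set Implicit Arguments. Unset Strict Implicit. Unset Printing Implicit Defensive.
Import GRing.Theory.
Local Open Scope ring_scope.

Lemma sum3 (F : nzRingType) (g : 'I_3 -> F) : \sum_(m < 3) g m = g 0 + g 1 + g 2.
Proof. rewrite !big_ord_recl big_ord0 addr0 addrA. by congr (g _ + g _ + g _); apply: val_inj. Qed.
Lemma ord3 (i : 'I_3) : i = 0 \/ i = 1 \/ i = 2.
Proof. case: i => [[|[|[|n]]] Hi]; [left|right;left|right;right|done]; exact: val_inj. Qed.

Section Basics.
Variable F : finFieldType.
Notation pt := {v : 'rV[F]_3 | normalized v}.

Lemma inc_mx (P l : pt) : incident P l = ((val P *m (val l)^T) 0 0 == 0).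
Proof. rewrite /incident mxE; congr (_ == _); apply: eq_bigr => i _; by rewrite mxE. Qed.

Lemma inc_sym (P l : pt) : incident P l = incident l P.
Proof. rewrite /incident; congr (_ == _); apply: eq_bigr => i _; by rewrite mulrC. Qed.

Lemma h01 : (0 == 1 :> F) = false.
Proof. by rewrite eq_sym oner_eq0. Qed.

Lemma normalize (w : 'rV[F]_3) : w != 0 -> exists c, normalized (c *: w).
Proof.
move=> wn0; rewrite /normalized.
have [h0|h0] := eqVneq (w 0 0) 0; last first.
  by exists (w 0 0)^-1; rewrite mxE mulVf ?eqxx.
have [h1|h1] := eqVneq (w 0 1) 0; last first.
  by exists (w 0 1)^-1; rewrite !mxE h0 mulr0 mulVf ?eqxx ?orbT.
have [h2|h2] := eqVneq (w 0 2) 0; last first.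
  by exists (w 0 2)^-1; rewrite !mxE h0 h1 mulr0 mulVf ?eqxx ?orbT.
case/eqP: wn0; apply/rowP => i; rewrite mxE.
by case: (ord3 i) => [->|[->|->]].
Qed.

Lemma norm_ne0 (v : pt) : val v != 0.
Proof.
case: v => v /= Hv; apply/eqP => v0; move: Hv; rewrite /normalized v0 !mxE.
by rewrite h01 eqxx /=.
Qed.

Lemma scal_eq (u v : pt) (c : F) : val u = c *: val v -> u = v.
Proof.
move=> e; have e' m : val u 0 m = c * val v 0 m by rewrite e mxE.
suff c1 : c = 1 by apply: val_inj; rewrite e c1 scale1r.
case: u e e' => u /= Hu _ e'; case: v e' => v /= Hv e'.
move: Hu; rewrite /normalized !e'.
case/orP: Hv => [/eqP->|/andP[/eqP-> H]].
  rewrite mulr1; case/orP => [/eqP//|/andP[/eqP c0]].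
  by rewrite c0 !mul0r h01 eqxx.
rewrite mulr0 eqxx /= h01 /=.
case/orP: H => [/eqP->|/andP[/eqP-> /eqP->]].
  rewrite mulr1; case/orP => [/eqP//|/andP[/eqP c0]].
  by rewrite c0 !mul0r h01.
by rewrite !mulr0 mulr1 eqxx h01 /= => /eqP.
Qed.

Lemma lin_aux (a b d a' b' d' x y z c : F) : a*x + b*y + d*z = 0 ->
  a'*x + b'*y + d'*z = 0 -> a = c*a' -> d = c*d' -> y != 0 -> b = c*b'.
Proof.
move=> H H' ea ed yn0.
have : (b - c*b')*y = (a*x + b*y + d*z) - c*(a'*x+b'*y+d'*z) - (a - c*a')*x - (d - c*d')*z by ring.
rewrite H H' ea ed !subrr !mul0r mulr0 !subr0 => /eqP.
by rewrite mulf_eq0 (negbTE yn0) orbF subr_eq0 => /eqP.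
Qed.

Lemma line_card_gen (l : pt) (i j k : 'I_3) :
 (forall m : 'I_3, m = i \/ m = j \/ m = k) ->
 (forall v w : 'rV[F]_3, \sum_(m<3) v 0 m * w 0 m = v 0 i * w 0 i + v 0 j * w 0 j + v 0 k * w 0 k) ->
 val l 0 j != 0 -> (#|[set P : pt | incident P l]| <= #|F|.+1)%N.
Proof.
move=> cov sumE lj.
set A := [set P : pt | incident P l].
pose f (P : pt) : option F := if val P 0 i == 0 then None else Some (val P 0 k / val P 0 i).
have key : forall (P P' : pt) c, P \in A -> P' \in A -> val P 0 i = c * val P' 0 i ->
    val P 0 k = c * val P' 0 k -> P = P'.
  move=> P P' c; rewrite !inE /incident !sumE => /eqP HP /eqP HP' ei ek.
  apply: (@scal_eq _ _ c); apply/rowP => m; rewrite mxE.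
  case: (cov m) => [->|[->|->]] //.
  exact: (lin_aux HP HP' ei ek lj).
have inj : {in A &, injective f}.
  move=> P P' PA P'A; rewrite /f.
  case: eqVneq => [Pi0|Pi0]; case: eqVneq => [P'i0|P'i0] //.
    move=> _.
    have P'k : val P' 0 k != 0.
      apply/eqP => P'k0; have := norm_ne0 P'; rewrite (_ : val P' = 0) ?eqxx //; apply/rowP => m.
      rewrite mxE; case: (cov m) => [->|[->|->]] //.
      move: P'A; rewrite inE /incident sumE => /eqP H.
      have := lin_aux H H (c := 0) _ _ lj; rewrite !mul0r; apply.
        by rewrite P'i0.
      by rewrite P'k0.
    apply: (key P P' (val P 0 k / val P' 0 k)) => //.
      by rewrite Pi0 P'i0 mulr0.
    by rewrite divfK.
  case=> E; apply: (key P P' (val P 0 i / val P' 0 i)) => //.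
    by rewrite divfK.
  rewrite -[LHS](divfK Pi0) E.
  by field.
rewrite -(card_in_imset inj); apply: leq_trans (max_card _) _.
by rewrite card_option.
Qed.

Lemma line_card (l : pt) : (#|[set P : pt | incident P l]| <= #|F|.+1)%N.
Proof.
have Hl := valP l; move: Hl; rewrite /normalized.
case/orP => [/eqP H|/andP[/eqP H0 /orP[/eqP H|/andP[/eqP H1 /eqP H]]]].
- apply: (@line_card_gen l 1 0 2).
  + by move=> m; case: (ord3 m) => [->|[->|->]]; auto.
  + by move=> v w; rewrite sum3; ring.
  + by rewrite H oner_eq0.
- apply: (@line_card_gen l 0 1 2).
  + by move=> m; case: (ord3 m) => [->|[->|->]]; auto.
  + by move=> v w; rewrite sum3.
  + by rewrite H oner_eq0.
- apply: (@line_card_gen l 0 2 1).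
  + by move=> m; case: (ord3 m) => [->|[->|->]]; auto.
  + by move=> v w; rewrite sum3; ring.
  + by rewrite H oner_eq0.
Qed.

Lemma lines_card (Q : pt) : (#|[set l : pt | incident Q l]| <= #|F|.+1)%N.
Proof.
rewrite (eq_card (B := [set l : pt | incident l Q])) ?line_card //.
by move=> l; rewrite !inE inc_sym.
Qed.

Lemma rank_line m (A : 'M[F]_(m,3)) : (\rank A < 3)%N ->
  exists l : pt, A *m (val l)^T = 0.
Proof.
move=> rk.
set C := cokermx A.
have : C != 0 by rewrite cokermx_eq0 /row_full ltn_eqF.
case/matrix0Pn => r0 [j Cj].
have AC r : \sum_k A r k * C k j = 0.
  transitivity ((A *m C) r j); first by rewrite mxE.
  by rewrite /C mulmx_coker mxE.
have wn0 : (col j C)^T != 0.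
  apply/matrix0Pn; exists 0; exists r0; rewrite 2!mxE. exact: Cj.
have [c Hc] := normalize wn0.
exists (exist (fun v : 'rV[F]_3 => normalized v) _ Hc); apply/matrixP => r z; rewrite [RHS]mxE mxE /=.
rewrite (ord1 z).
transitivity (c * \sum_k A r k * C k j); last by rewrite AC mulr0.
rewrite mulr_sumr; apply: eq_bigr => k _.
by rewrite 4!mxE mulrCA.
Qed.

Lemma line_through (P R : pt) : exists l : pt, incident P l && incident R l.
Proof.
have rk : (\rank (col_mx (val P) (val R)) < 3)%N by apply: leq_ltn_trans (rank_leq_row _) _.
have [l Hl] := rank_line rk; exists l.
rewrite !inc_mx; move: Hl; rewrite mul_col_mx => /eqP; rewrite col_mx_eq0 => /andP[/eqP H1 /eqP H2].
by rewrite H1 H2 mxE eqxx.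
Qed.

Lemma nonspan_line (T : {set pt}) : ~~ spans_plane T ->
  exists l : pt, forall P, P \in T -> incident P l.
Proof.
rewrite /spans_plane /row_full => H.
set M := (\sum_(P in T) <<val P>>)%MS.
have rk : (\rank M < 3)%N by rewrite ltn_neqAle H rank_leq_col.
have [l Hl] := rank_line rk; exists l => P PT.
have : (val P <= M)%MS by apply: (sumsmx_sup P) => //; rewrite genmxE.
case/submxP => D HD; rewrite inc_mx HD -mulmxA Hl mulmx0 mxE //.
Qed.

Local Open Scope nat_scope.

Lemma meet_le (T : {set pt}) (Q l : pt) : Q \notin T -> incident Q l -> meet_card T l <= #|F|.
Proof.
move=> QT Ql; rewrite /meet_card.
have H := line_card l.
rewrite (cardsD1 Q) inE Ql in H.
apply: (@leq_trans #|[set P : pt | incident P l] :\ Q|); last by rewrite add1n ltnS in H.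
apply: subset_leq_card.
apply/subsetP => P; rewrite !inE => /andP[PT ->]; rewrite andbT.
by apply: contraNneq QT => <-.
Qed.

Lemma sum_lines_const (Q : pt) c : \sum_(l | incident Q l) c = #|[set l : pt | incident Q l]| * c.
Proof. by rewrite -sum_nat_const; apply: eq_bigl => l; rewrite inE. Qed.

Lemma cover (T : {set pt}) (Q : pt) : #|T| <= \sum_(l | incident Q l) meet_card T l.
Proof.
have E l : meet_card T l = \sum_(P in T) (incident P l : nat).
  rewrite /meet_card -sum1_card big_mkcond [RHS]big_mkcond; apply: eq_bigr => P _.
  by rewrite inE; case: (P \in T); case: (incident P l).
under eq_bigr do rewrite E.
rewrite exchange_big /= -sum1_card; apply: leq_sum => P _.
have [l0 /andP[H1 H2]] := line_through Q P.
by rewrite (bigD1 l0) //= H2.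
Qed.

Lemma binle (k : nat) : k <= 'C(k, 2) + 1.
Proof. case: k => [//|k]; rewrite binS bin1; lia. Qed.

Lemma binle3 (k : nat) : 3 <= k -> k + 1 <= 'C(k, 2) + 1.
Proof.
case: k => [//|k] k3; rewrite binS bin1.
have : 'C(2, 2) <= 'C(k, 2) by apply: leq_bin2l; lia.
rewrite bin2 /=; lia.
Qed.

Lemma sec_bound (T : {set pt}) (Q : pt) : #|T| <= secant_mult T Q + #|F|.+1.
Proof.
apply: (leq_trans (cover T Q)).
apply: (@leq_trans (\sum_(l | incident Q l) ('C(meet_card T l, 2) + 1))).
  by apply: leq_sum => l _; apply: binle.
rewrite big_split /= sum_lines_const muln1 leq_add2l; exact: lines_card.
Qed.

Lemma sec_bound2 (T : {set pt}) (Q : pt) : 2 * #|F| + 3 <= #|T| ->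
  #|T| <= secant_mult T Q + #|F|.
Proof.
move=> HT.
have C := cover T Q.
case: (boolP [exists l, incident Q l && (3 <= meet_card T l)]); last first.
  move/existsPn => H.
  have : \sum_(l | incident Q l) meet_card T l <= \sum_(l | incident Q l) 2.
    apply: leq_sum => l Ql; have := H l; rewrite Ql /=; lia.
  rewrite sum_lines_const; have := lines_card Q; nia.
case/existsP => l0 /andP[Ql0 k0].
have : \sum_(l | incident Q l) meet_card T l + 1 <= \sum_(l | incident Q l) ('C(meet_card T l, 2) + 1).
  rewrite (bigD1 l0) //= [X in _ <= X](bigD1 l0) //=.
  have := binle3 k0.
  have : \sum_(i | incident Q i && (i != l0)) meet_card T i <=
         \sum_(i | incident Q i && (i != l0)) ('C(meet_card T i, 2) + 1).
    by apply: leq_sum => l _; apply: binle.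
  move=> h1 h2; rewrite addnAC; exact: leq_add h2 h1.
rewrite big_split /= sum_lines_const muln1.
have := lines_card Q; rewrite /secant_mult.
move=> h1 h2; have h3 := leq_trans (leq_add C (leqnn 1)) h2; move: h1 h3.
move: (\sum_(l | incident Q l) 'C(meet_card T l, 2)) => s.
move: #|[set l : pt | incident Q l]| => L. move=> h1 h3; rewrite -(leq_add2r 1) -addnA; apply: leq_trans h3 _; rewrite leq_add2l addn1; exact: h1.
Qed.
End Basics.

Local Open Scope nat_scope.

Theorem proposition6p1 (F : finFieldType) (mu : nat)
  (S : {set {v : 'rV[F]_3 | normalized v}}) :
  (0 < mu)%N -> minimal_saturating mu S ->
  (mu <= (#|F| + 1) * 'C(#|F|, 2))%N /\
  ((mu <= #|F| + 2)%N -> (#|S| <= #|F| + mu + 1)%N) /\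
  ((#|F| + 3 <= mu)%N -> (#|S| <= minn (#|F| + mu) (#|F| ^ 2 + #|F|))%N).
Proof.
move=> mu0 [[Hspan HneT Hsat] Hmin].
have [Q QS] : exists Q, Q \notin S.
  have : S \proper setT by rewrite properT.
  by case/properP => _ [Q _ QS]; exists Q.
have red P : P \in S -> (#|F| + 2 <= #|S :\ P|) ->
    (forall R, R \notin S :\ P -> mu <= secant_mult (S :\ P) R) -> False.
  move=> PS big sat; apply: (Hmin (S :\ P)).
  - exact: subD1set.
  - by rewrite (cardsD1 P S) PS.
  split => //.
  - apply/negPn/negP => /nonspan_line [l Hl].
    have : #|S :\ P| <= #|[set R | incident R l]|.
      by apply: subset_leq_card; apply/subsetP => R RS; rewrite inE Hl.
    have := line_card l; move: big.
    move: #|S :\ P| => a; move: #|[set R | incident R l]| => b; move: #|F| => c.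
    lia.
  - apply: contra HneT => /eqP E; rewrite eqEsubset subsetT /= -E; exact: subD1set.
have gen n : #|F| + 2 <= n -> n + 1 <= #|S| ->
    (forall P R, P \in S -> R \notin S :\ P -> mu <= secant_mult (S :\ P) R) -> False.
  move=> h1 h2 h3.
  have : 0 < #|S| by apply: leq_trans h2; rewrite addn1.
  rewrite card_gt0 => /set0Pn [P PS].
  apply: (red P PS); last by move=> R; exact: h3.
  move: h2; rewrite (cardsD1 P S) PS; move: #|S :\ P| => a; lia.
split.
  apply: leq_trans (Hsat Q QS) _; rewrite /secant_mult.
  apply: (@leq_trans (\sum_(l | incident Q l) 'C(#|F|, 2))).
    by apply: leq_sum => l Ql; apply: leq_bin2l; exact: (meet_le QS Ql).
  by rewrite sum_lines_const addn1 leq_mul2r lines_card orbT.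
have boundA : #|S| <= #|F| + mu + 1.
  rewrite leqNgt; apply/negP => H.
  apply: (gen (#|F| + mu + 1)); first by move: #|F| => c; lia.
    by rewrite addn1.
  move=> P R PS _.
  have := sec_bound (S :\ P) R.
  move: H; rewrite (cardsD1 P S) PS.
  move: (secant_mult (S :\ P) R) #|S :\ P| #|F| => a b c; lia.
split => // mu3.
rewrite leq_min; apply/andP; split.
  rewrite leqNgt; apply/negP => H.
  apply: (gen (#|F| + mu)); first by move: #|F| => c; lia.
    by rewrite addn1.
  move=> P R PS _.
  have := @sec_bound2 _ (S :\ P) R.
  move: H mu3; rewrite (cardsD1 P S) PS.
  move: (secant_mult (S :\ P) R) #|S :\ P| #|F| => a b c; lia.
have pS : S \proper setT by rewrite properT.
have := proper_card pS.
have := cover (setT :\ Q) Q.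
have : \sum_(l | incident Q l) meet_card (setT :\ Q) l <= \sum_(l | incident Q l) #|F|.
  apply: leq_sum => l Ql; apply: (meet_le _ Ql).
by rewrite in_setD1 eqxx.
rewrite sum_lines_const.
have := lines_card Q.
rewrite [#|setT|](cardsD1 Q) inE.
move: (\sum_(l | _) _) #|setT :\ Q| #|[set l | _]| #|S| #|F| => a b c d e.
nia.
Qed.
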